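(* Let $\gamma, c_1, c_2 > 0$ be real numbers. There exist $\alpha_0 > 0$ and $N_0$, depending only on $\gamma, c_1, c_2$, such that the following holds. Let $N \ge N_0$, let $Q = N^\gamma$, let $X \subseteq [N]$ be a set of integers, and suppose there is a set of primes $P \subseteq \mathcal{P}(Q)$ with $w(P) \ge c_1 \log Q$ such that for every $p \in P$ there are at least $c_2|X|$ elements of $X$ lying in at most $\alpha p$ residue classes modulo $p$, where $0 < \alpha \le \alpha_0$ is independent of $p$. Then $|X| < Q$.
   Context: $[N] = \{0,1,\ldots,N\}$. $\mathcal{P}(Q)$ denotes the set of primes $p \le Q$, and for a finite set of primes $P$, $w(P) := \sum_{p \in P} \frac{\log p}{p}$. *)

(* Defs.v *)
From Stdlib Require Import Reals.
From mathcomp Require Import all_boot.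

(* w(P) = sum_{p in P} log p / p, for a finite set of primes P given as a
   duplicate-free list. *)
Definition w (P : seq nat) : R :=
  foldr (fun (p : nat) (acc : R) => Rplus (Rdiv (ln (INR p)) (INR p)) acc) R0 P.

(* "at least c2|X| elements of X lie in at most alpha*p residue classes mod p":
   there is a set S of residues mod p with |S| <= alpha p such that at least
   c2 |X| elements x of X satisfy x mod p in S. *)
Definition concentrated (X : seq nat) (p : nat) (alpha c2 : R) : Prop :=
  exists S : seq nat, uniq S /\ all (fun r => r < p) S /\
    Rle (INR (size S)) (Rmult alpha (INR p)) /\
    Rle (Rmult c2 (INR (size X))) (INR (size [seq x <- X | x %% p \in S])).

(* Main.v *)
Require Import Defs.
From Stdlib Require Import Reals.
From mathcomp Require Import all_boot.
From Stdlib Require Import Lra.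
From mathcomp Require Import all_order all_algebra.
From mathcomp Require Import Rstruct.
From mathcomp.algebra_tactics Require Import ring lra.
Import Order.TTheory GRing.Theory Num.Theory.

Definition E (X : seq nat) (p : nat) : nat :=
  \sum_(x <- X) count (fun y => y %% p == x %% p) X.

Section Helpers.

Lemma not_dvd_prod (p : nat) (s : seq nat) :
  prime p -> all prime s -> p \notin s -> ~~ (p %| \prod_(q <- s) q).
Proof.
move=> pp; elim: s => [|q s IH] /=; first by rewrite big_nil dvdn1 -(prime_gt1 pp) => _ _; case: p pp => [|[]].
move=> /andP[pq ps]; rewrite in_cons negb_or => /andP[npq nps].
by rewrite big_cons Euclid_dvdM // dvdn_prime2 // negb_or npq IH.
Qed.

Lemma prod_dvd (s : seq nat) d : uniq s -> all prime s -> all (fun p => p %| d) s ->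
  \prod_(p <- s) p %| d.
Proof.
elim: s => [|p s IH] /=; first by rewrite big_nil dvd1n.
move=> /andP[nps us] /andP[pp ps] /andP[pd sd].
rewrite big_cons Gauss_dvd ?pd ?IH //.
by rewrite prime_coprime // not_dvd_prod.
Qed.

Lemma part_sum (T : eqType) (S : seq nat) (X : seq T) (k : T -> nat) (g : T -> nat) :
  uniq S -> \sum_(r <- S) \sum_(x <- X | k x == r) g x = \sum_(x <- X | k x \in S) g x.
Proof.
elim: S => [|r S IH] /=.
  by rewrite big_nil big1 // => x; rewrite in_nil.
move=> /andP[nrS uS]; rewrite big_cons IH // [in RHS]big_mkcond [X in _ + X]big_mkcond
  [X in X + _]big_mkcond -big_split /=.
apply: eq_bigr => x _; rewrite in_cons.
case: eqP => [->|] /=; last by rewrite add0n.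
by rewrite (negbTE nrS) addn0.
Qed.

Local Open Scope ring_scope.

Lemma cs_step (a A B k : R) : 0 <= k -> 0 <= B -> A ^+ 2 <= k * B ->
  (a + A) ^+ 2 <= (k + 1) * (a ^+ 2 + B).
Proof.
move=> k0 B0 h.
have key : 2 * a * A <= k * a ^+ 2 + B.
  have [kz|kp] := eqVneq k 0.
    move: h; rewrite kz mul0r => h.
    have : A ^+ 2 == 0 by rewrite eq_le h sqr_ge0.
    rewrite sqrf_eq0 => /eqP ->; lra.
  have kpos : 0 < k by rewrite lt_def kp k0.
  have : 0 <= k * (k * a ^+ 2 + B - 2 * a * A).
    have := sqr_ge0 (k * a - A); nra.
  rewrite pmulr_rge0 //; lra.
nra.
Qed.

Lemma CS (T : Type) (s : seq T) (f : T -> R) :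
  (\sum_(i <- s) f i) ^+ 2 <= (size s)%:R * \sum_(i <- s) f i ^+ 2.
Proof.
elim: s => [|x s IH]; first by rewrite !big_nil expr0n /= mulr0.
rewrite !big_cons /= -natr1; apply: cs_step => //.
by apply: sumr_ge0 => i _; exact: sqr_ge0.
Qed.
Lemma lemA (X : seq nat) (p : nat) (alpha c2 : R) : 0 <= c2 -> 0 <= alpha ->
  concentrated X p alpha c2 ->
  (c2 * (size X)%:R) ^+ 2 <= alpha * p%:R * (E X p)%:R.
Proof.
move=> c20 a0 [S [uS [_ [hS hC]]]].
move/RleP: hS; rewrite !INRE RmultE => hS.
move/RleP: hC; rewrite !INRE RmultE size_filter => hC.
pose c r := count (fun x => (x %% p)%N == r) X.
have sum_c : (\sum_(r <- S) c r = count (fun x => (x %% p)%N \in S) X)%N.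
  rewrite -sum1_count -(part_sum _ S X (fun x => (x %% p)%N) (fun=> 1%N) uS).
  by apply: eq_bigr => r _; rewrite /c -sum1_count.
have sum_c2 : (\sum_(r <- S) (c r ^ 2)%N <= E X p)%N.
  have -> : (\sum_(r <- S) (c r ^ 2)%N =
      \sum_(r <- S) \sum_(x <- X | (x %% p)%N == r) count (fun y => (y %% p)%N == (x %% p)%N) X)%N.
    apply: eq_bigr => r _.
    rewrite (eq_bigr (fun=> c r)); last by move=> x /eqP ->.
    by rewrite big_const_seq iter_addn_0 mulnn.
  rewrite (part_sum _ S X (fun x => (x %% p)%N) (fun x => count (fun y => (y %% p)%N == (x %% p)%N) X)) //.
  rewrite /E big_mkcond /=; apply: leq_sum => x _; by case: (_ \in _).
have h1 : c2 * (size X)%:R <= \sum_(r <- S) (c r)%:R by rewrite -natr_sum sum_c.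
have h2 := CS _ S (fun r => (c r)%:R).
have h3 : \sum_(r <- S) ((c r)%:R : R) ^+ 2 <= (E X p)%:R.
  under eq_bigr => r _ do rewrite -natrX.
  by rewrite -natr_sum ler_nat.
have h0 : 0 <= c2 * (size X)%:R by apply: mulr_ge0.
have hS0 : 0 <= \sum_(r <- S) ((c r)%:R : R) ^+ 2 by apply: sumr_ge0 => r _; exact: sqr_ge0.
move: h1 h2 h3 h0 hS0 hS.
set u := c2 * _; set v := \sum_(r <- S) _; set w := \sum_(r <- S) _.
move=> h1 h2 h3 h0 hS0 hS.
have hap : 0 <= alpha * p%:R by apply: mulr_ge0.
set ap := alpha * p%:R in hS hap *.
have e1 : u ^+ 2 <= v ^+ 2 by nra.
have e2 : (size S)%:R * w <= ap * w by nra.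
have e3 : ap * w <= ap * (E X p)%:R by nra.
lra.
Qed.

Lemma count_sum (T : Type) (a : pred T) (s : seq T) :
  count a s = (\sum_(x <- s) (a x : nat))%N.
Proof. by elim: s => [|x s IH] /=; rewrite ?big_nil ?big_cons ?IH. Qed.

Lemma sum_const_seq (T : Type) (s : seq T) (c : R) :
  \sum_(x <- s) c = (size s)%:R * c.
Proof.
elim: s => [|x s IH] /=; first by rewrite big_nil mul0r.
by rewrite big_cons IH -natr1; ring.
Qed.

Lemma ln_leR (x y : R) : 0 < x -> x <= y -> ln x <= ln y.
Proof.
move=> x0; rewrite le_eqVlt => /orP[/eqP->//|xy].
apply/RleP/Rlt_le/ln_increasing; exact/RltP.
Qed.

Lemma ln_ge0 (n : nat) : (0 < n)%N -> 0 <= ln n%:R.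
Proof.
move=> n0; have -> : 0 = ln 1 by rewrite ln_1.
 apply: ln_leR => //; by rewrite ler1n.
Qed.

Lemma prod_gt0 (s : seq nat) : all (fun p => 0 < p)%N s -> (0 < \prod_(p <- s) p)%N.
Proof.
elim: s => [|p s IH] /=; first by rewrite big_nil.
by move=> /andP[p0 s0]; rewrite big_cons muln_gt0 p0 IH.
Qed.

Lemma lnprod (s : seq nat) : all (fun p => 0 < p)%N s ->
  \sum_(p <- s) ln p%:R = ln (\prod_(p <- s) p)%N%:R.
Proof.
elim: s => [|p s IH] /=; first by rewrite !big_nil ln_1.
move=> /andP[p0 s0]; rewrite !big_cons natrM ln_mult ?IH //.
  by apply/RltP; rewrite ltr0n.
apply/RltP; rewrite ltr0n; exact: prod_gt0.
Qed.

Lemma offdiag (P : seq nat) (x y N : nat) : uniq P -> all prime P -> x != y ->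
  (x <= N)%N -> (y <= N)%N ->
  \sum_(p <- P) ln p%:R * ((y %% p == x %% p)%N : nat)%:R <= ln N%:R.
Proof.
move=> uP pP nxy xN yN.
have [d [d0 [dN hd]]] : exists d, [/\ (0 < d)%N, (d <= N)%N &
    forall p, ((y %% p)%N == (x %% p)%N) = (p %| d)%N].
  case: (leqP x y) => hxy.
    exists (y - x)%N; split.
    - by rewrite subn_gt0 ltn_neqAle nxy hxy.
    - exact: leq_trans (leq_subr _ _) yN.
    - by move=> p; rewrite eqn_mod_dvd.
  exists (x - y)%N; split.
  - by rewrite subn_gt0.
  - exact: leq_trans (leq_subr _ _) xN.
  - by move=> p; rewrite eq_sym eqn_mod_dvd // ltnW.
under eq_bigr => p _ do rewrite hd.
rewrite (eq_bigr (fun p => if (p %| d)%N then ln p%:R else 0)); last first.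
  by move=> p _; case: (p %| d)%N; rewrite ?mulr1 ?mulr0.
rewrite -big_mkcond -big_filter.
have fpos : all (fun p => 0 < p)%N [seq p <- P | (p %| d)%N].
  apply/allP => p; rewrite mem_filter => /andP[_ pin].
  by apply: prime_gt0; move/allP: pP; apply.
rewrite lnprod //; apply: ln_leR.
  by rewrite ltr0n prod_gt0.
rewrite ler_nat; apply: leq_trans dN; apply: dvdn_leq => //.
apply: prod_dvd; first exact: filter_uniq.
  by apply/allP => p; rewrite mem_filter => /andP[_ pin]; move/allP: pP; apply.
by apply/allP => p; rewrite mem_filter => /andP[].
Qed.

Lemma lemB (X P : seq nat) (N : nat) : (0 < N)%N -> uniq X -> all (fun x => x <= N)%N X ->
  uniq P -> all prime P ->
  \sum_(p <- P) ln p%:R * (E X p)%:R <=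
    (size X)%:R ^+ 2 * ln N%:R + (size X)%:R * \sum_(p <- P) ln p%:R.
Proof.
move=> N0 uX XN uP pP.
set K := \sum_(p <- P) ln p%:R.
have K0 : 0 <= K.
  rewrite /K big_seq; apply: sumr_ge0 => p pin; apply: ln_ge0.
  by apply: prime_gt0; move/allP: pP; apply.
have L0 : 0 <= ln N%:R by apply: ln_ge0.
have -> : \sum_(p <- P) ln p%:R * (E X p)%:R =
   \sum_(x <- X) \sum_(y <- X) \sum_(p <- P) ln p%:R * ((y %% p == x %% p)%N : nat)%:R.
  transitivity (\sum_(p <- P) \sum_(x <- X) \sum_(y <- X)
      ln p%:R * ((y %% p == x %% p)%N : nat)%:R).
    apply: eq_bigr => p _; rewrite /E natr_sum mulr_sumr; apply: eq_bigr => x _.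
    by rewrite count_sum natr_sum mulr_sumr.
  rewrite exchange_big; apply: eq_bigr => x _; exact: exchange_big.
rewrite big_seq.
apply: le_trans (_ : \sum_(x <- X | x \in X) ((size X)%:R * ln N%:R + K) <= _).
  apply: ler_sum => x xin.
  apply: le_trans (_ : \sum_(y <- X) (ln N%:R + ((y == x) : nat)%:R * K) <= _).
    rewrite big_seq [Y in _ <= Y]big_seq; apply: ler_sum => y yin.
    have [->|nyx] := eqVneq y x.
      rewrite mul1r; under eq_bigr => p _ do rewrite eqxx mulr1.
      by rewrite -/K; lra.
    rewrite mul0r addr0; apply: offdiag => //.
    - by rewrite eq_sym.
    - exact: (allP XN x xin).
    - exact: (allP XN y yin).
  rewrite big_split /= sum_const_seq -mulr_suml -natr_sum -count_sum.
  by rewrite (count_uniq_mem _ uX) xin mul1r.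
rewrite -big_seq sum_const_seq; lra.
Qed.

Lemma sizeP_le (P : seq nat) (Q : R) : 0 <= Q -> uniq P ->
  (forall p, p \in P -> (0 < p)%N /\ p%:R <= Q) -> (size P)%:R <= Q.
Proof.
move=> Q0 uP hP.
set m := (\max_(p <- P) p)%N.
have sm : (size P <= m)%N.
  rewrite -(size_iota 1 m); apply: uniq_leq_size => // p pin.
  have := @leq_bigmax_seq _ P xpredT (fun x => x) p pin isT.
  rewrite mem_iota add1n ltnS => ->; rewrite andbT.
  by case: (hP p pin).
apply: le_trans (_ : m%:R <= Q); first by rewrite ler_nat.
rewrite /m big_seq; apply: (big_ind (fun k : nat => k%:R <= Q)) => //.
  move=> a b ha hb; rewrite /maxn; by case: ifP.
by move=> p pin; case: (hP p pin).
Qed.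

Lemma main_ring (gamma c1 c2 alpha : R) (N : nat) (X P : seq nat) :
  0 < gamma -> 0 < c1 -> 0 < c2 -> (2 <= N)%N -> uniq X ->
  all (fun x => x <= N)%N X -> uniq P ->
  (forall p, p \in P -> prime p /\ p%:R <= Rpower N%:R gamma) ->
  c1 * ln (Rpower N%:R gamma) <= \sum_(p <- P) ln p%:R / p%:R ->
  0 < alpha -> alpha <= c2 * c2 * c1 * gamma / (2 * (1 + gamma)) ->
  (forall p, p \in P -> concentrated X p alpha c2) ->
  (size X)%:R < Rpower N%:R gamma.
Proof.
move=> g0 c10 c20 N2 uX XN uP hP hw a0 aa hc.
set Q := Rpower N%:R gamma in hP hw *.
set L := ln N%:R.
have N1 : (1 < N%:R :> R) by rewrite ltr1n.
have L0 : 0 < L.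
  have -> : 0 = ln 1 by rewrite ln_1.
  by apply/RltP; apply: ln_increasing; [exact: Rlt_0_1 | apply/RltP].
have lnQ : ln Q = gamma * L by rewrite /Q ln_Rpower.
have Q0 : 0 < Q by apply/RltP; rewrite /Q /Rpower; exact: exp_pos.
rewrite ltNge; apply/negP => nQ.
set n : R := (size X)%:R in nQ *.
have n0 : 0 < n by lra.
have pP : all prime P by apply/allP => p /hP [].
have hB := lemB X P N (ltnW N2) uX XN uP pP.
set K := \sum_(p <- P) ln p%:R in hB.
have hK : K <= (size P)%:R * (gamma * L).
  rewrite /K big_seq -lnQ.
  apply: le_trans (_ : \sum_(p <- P | p \in P) ln Q <= _).
    apply: ler_sum => p pin; apply: ln_leR; last by case: (hP p pin).
    by rewrite ltr0n prime_gt0 //; case: (hP p pin).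
  by rewrite -big_seq sum_const_seq.
have hsP : (size P)%:R <= Q.
  apply: sizeP_le => //; first lra.
  by move=> p pin; case: (hP p pin) => pp ->; rewrite prime_gt0.
set M := (c2 * n) ^+ 2 / alpha.
have hlow : \sum_(p <- P) ln p%:R / p%:R * M <= \sum_(p <- P) ln p%:R * (E X p)%:R.
  rewrite big_seq [Y in _ <= Y]big_seq; apply: ler_sum => p pin.
  have [pp _] := hP p pin.
  have p0 : 0 < p%:R :> R by rewrite ltr0n prime_gt0.
  have lp0 : 0 <= ln p%:R by apply: ln_ge0; rewrite prime_gt0.
  have hA := lemA X p alpha c2 (ltW c20) (ltW a0) (hc p pin).
  have hM : M <= p%:R * (E X p)%:R.
    rewrite /M mulrC ler_pdivrMl // mulrA; exact: hA.
  have -> : ln p%:R * (E X p)%:R = ln p%:R / p%:R * (p%:R * (E X p)%:R).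
    by field; rewrite gt_eqF.
  apply: ler_wpM2l => //; apply: divr_ge0 => //; exact: ltW.
rewrite -mulr_suml in hlow.
rewrite -/n in hB; rewrite lnQ in hw.
set W := \sum_(p <- P) ln p%:R / p%:R in hw hlow.
have M0 : 0 <= M by apply: divr_ge0; [exact: sqr_ge0 | exact: ltW].
have gL : 0 < gamma * L by apply: mulr_gt0.
have s1 : c1 * (gamma * L) * M <= W * M by apply: ler_wpM2r.
have s2 : K <= n * (gamma * L).
  apply: le_trans hK _; apply: ler_wpM2r; [exact: ltW | lra].
have s2' : n * K <= n * (n * (gamma * L)) by apply: ler_wpM2l; [exact: ltW|].
have s3 : c1 * gamma * M * L <= (n ^+ 2 * (1 + gamma)) * L.
  have -> : c1 * gamma * M * L = c1 * (gamma * L) * M by ring.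
  have -> : n ^+ 2 * (1 + gamma) * L = n ^+ 2 * L + n * (n * (gamma * L)) by ring.
  rewrite /L in s1 s2' *; lra.
rewrite ler_pM2r // in s3.
have hMa : M * alpha = (c2 * n) ^+ 2 by rewrite /M; field; rewrite gt_eqF.
have g1 : 0 < 2 * (1 + gamma) by lra.
have aa' : alpha * (2 * (1 + gamma)) <= c2 * c2 * c1 * gamma.
  by rewrite -ler_pdivlMr.
have s5 : c1 * gamma * M * alpha <= n ^+ 2 * (1 + gamma) * alpha.
  by apply: ler_wpM2r; [exact: ltW|].
have e5 : c1 * gamma * M * alpha = c2 * c2 * c1 * gamma * n ^+ 2.
  by rewrite -mulrA hMa; ring.
rewrite e5 in s5.
have s6 : n ^+ 2 * (1 + gamma) * alpha * 2 <= c2 * c2 * c1 * gamma * n ^+ 2.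
  have n20 : 0 <= n ^+ 2 by exact: sqr_ge0.
  have := ler_wpM2l n20 aa'; move=> h; nra.
have pos : 0 < c2 * c2 * c1 * gamma * n ^+ 2.
  by apply: mulr_gt0; [apply: mulr_gt0; [apply: mulr_gt0; [apply: mulr_gt0|]|]|
    apply: exprn_gt0].
lra.
Qed.

End Helpers.

Lemma wE (P : seq nat) : w P = (\sum_(p <- P) ln p%:R / p%:R)%R.
Proof.
elim: P => [|p P IH]; first by rewrite big_nil.
by rewrite big_cons -IH /= INRE RdivE RplusE.
Qed.

Theorem lemma3p1 (gamma c1 c2 : R) :
  Rlt R0 gamma -> Rlt R0 c1 -> Rlt R0 c2 ->
  exists (alpha0 : R) (N0 : nat), Rlt R0 alpha0 /\
  forall (N : nat) (X P : seq nat) (alpha : R),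
    N0 <= N ->
    uniq X -> all (fun x => x <= N) X ->
    uniq P -> (forall p, p \in P -> prime p /\ Rle (INR p) (Rpower (INR N) gamma)) ->
    Rle (Rmult c1 (ln (Rpower (INR N) gamma))) (w P) ->
    Rlt R0 alpha -> Rle alpha alpha0 ->
    (forall p, p \in P -> concentrated X p alpha c2) ->
    Rlt (INR (size X)) (Rpower (INR N) gamma).
Proof.
move=> /RltP g0 /RltP c10 /RltP c20.
have {}g0 : (0 < gamma)%R := g0.
have {}c10 : (0 < c1)%R := c10.
have {}c20 : (0 < c2)%R := c20.
exists (c2 * c2 * c1 * gamma / (2 * (1 + gamma)))%R, 2%N; split.
  apply/RltP; apply: divr_gt0; last by lra.
  by apply: mulr_gt0 => //; apply: mulr_gt0 => //; apply: mulr_gt0.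
move=> N X P alpha hN uX XN uP hP hw /RltP a0 /RleP aa hc.
have {}a0 : (0 < alpha)%R := a0.
apply/RltP; rewrite !INRE; apply: (main_ring gamma c1 c2 alpha N X P) => //.
- move=> p pin; have [pp /RleP] := hP p pin; by rewrite !INRE.
- by move/RleP: hw; rewrite wE !INRE RmultE.
Qed.
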